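(* Let $p$ be a prime, $q$ a power of $p$, and $F$ a field of characteristic $p$ containing $\mathbb{F}_q$. Let $L=a_0x+a_1x^q+\cdots+a_{n-1}x^{q^{n-1}}+x^{q^n}\in F[x]$ be a monic $q$-polynomial of $q$-degree $n\ge 1$ with $a_0\neq 0$. Let $E$ be a splitting field of $L$ over $F$, let $\alpha_1,\dots,\alpha_n$ be an $\mathbb{F}_q$-basis of the $\mathbb{F}_q$-vector space $V\subseteq E$ of roots of $L$, and let $\delta=\det D$, where $D$ is the $n\times n$ matrix whose $(i,j)$ entry is $\alpha_i^{q^{j-1}}$ ($1\le i,j\le n$). Then $\delta\neq 0$, and: (1) $\delta^{q-1}\in F$; (2) $F(\delta)$ is a normal extension of $F$.
   Context: A $q$-polynomial over $F$ is a polynomial of the form $\sum_{i=0}^n a_i x^{q^i}\in F[x]$; if $a_n\neq0$ its $q$-degree is $n$. When $a_0\neq 0$, the roots of $L$ in $E$ are distinct and form an $n$-dimensional $\mathbb{F}_q$-vector space $V$. *)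

(* Defs.v *)
From HB Require Import structures.
From mathcomp Require Import all_boot all_order all_algebra all_field.
Set Implicit Arguments. Unset Strict Implicit. Unset Printing Implicit Defensive.
Import GRing.Theory.
Local Open Scope ring_scope.

Definition q_poly (F : fieldType) (q n : nat) (a : nat -> F) : {poly F} :=
  \sum_(i < n) (a i)%:P * 'X^(q ^ i) + 'X^(q ^ n).

(* The Moore matrix D with D_{ij} = alpha_i^{q^{j}} (0-indexed, i.e. q^{j-1} 1-indexed). *)
Definition moore_mx (E : fieldType) (q n : nat) (alpha : 'I_n -> E) : 'M[E]_n :=
  \matrix_(i < n, j < n) alpha i ^+ (q ^ j).

(* Main.v *)
Require Import Defs.
From HB Require Import structures.
From mathcomp Require Import all_boot all_order all_algebra all_field.
From mathcomp Require Import zify.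
Set Implicit Arguments. Unset Strict Implicit. Unset Printing Implicit Defensive.
Import GRing.Theory.
Local Open Scope ring_scope.

Lemma frob_add (R : comNzRingType) p (Hp : p \in [pchar R]) m (x y : R) :
  (x + y) ^+ (p ^ m) = x ^+ (p ^ m) + y ^+ (p ^ m).
Proof.
apply: exprDn_pchar; rewrite pnatX pnatE ?Hp //; exact: pcharf_prime Hp.
Qed.

Lemma frob_sum (R : comNzRingType) p (Hp : p \in [pchar R]) m (I : Type) (r : seq I) (P : pred I) (G : I -> R) :
  (\sum_(i <- r | P i) G i) ^+ (p ^ m) = \sum_(i <- r | P i) G i ^+ (p ^ m).
Proof.
apply: (big_morph (fun x => x ^+ (p ^ m))) => [x y|]; first exact: frob_add.
by rewrite expr0n expn_eq0 -[p == 0%N]negbK -lt0n (prime_gt0 (pcharf_prime Hp)).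
Qed.

Section Main.
Variables (p q k : nat) (F : fieldType).
Hypotheses (Hp : prime p) (Hk : (0 < k)%N) (Hqk : q = (p ^ k)%N) (HcharF : p \in [pchar F]).
Variables (K : finFieldType) (f : {rmorphism K -> F}).
Hypothesis HK : #|K| = q.
Variables (n : nat) (a : nat -> F).
Hypotheses (Hn : (0 < n)%N) (Ha0 : a 0%N != 0).
Variables (E : splittingFieldType F) (alpha : 'I_n -> E).
Local Notation LE := (map_poly (in_alg E) (q_poly q n a)).
Hypothesis Hroots : forall i, root LE (alpha i).
Hypothesis Hfree : forall c : 'I_n -> K,
      \sum_(i < n) f (c i) *: alpha i = 0 -> forall i, c i = 0.
Hypothesis Hspan : forall x : E, root LE x ->
      exists c : 'I_n -> K, x = \sum_(i < n) f (c i) *: alpha i.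

Let emb (x : K) : E := in_alg E (f x).

Lemma HcharE : p \in [pchar E].
Proof. by rewrite (pchar_lalg E). Qed.

Lemma q_gt1 : (1 < q)%N.
Proof. by rewrite Hqk -{1}(expn0 p) ltn_exp2l ?prime_gt1. Qed.

Lemma frobq j (x y : E) : (x + y) ^+ (q ^ j) = x ^+ (q ^ j) + y ^+ (q ^ j).
Proof. by rewrite Hqk -expnM; apply: frob_add HcharE _ _ _. Qed.

Lemma frobq_sum j (I : Type) (r : seq I) (P : pred I) (G : I -> E) :
  (\sum_(i <- r | P i) G i) ^+ (q ^ j) = \sum_(i <- r | P i) G i ^+ (q ^ j).
Proof. by rewrite Hqk -expnM; apply: frob_sum HcharE _ _ _ _ _. Qed.

Lemma embq j x : emb x ^+ (q ^ j) = emb x.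
Proof.
elim: j => [|j IH]; first by rewrite expn0 expr1.
rewrite expnSr exprM IH /emb -rmorphXn -rmorphXn -HK expf_card //.
Qed.

Lemma embZ x (y : E) : f x *: y = emb x * y.
Proof. by rewrite /emb /= mulr_algl. Qed.

Lemma evalL x : LE.[x] = \sum_(i < n) in_alg E (a i) * x ^+ (q ^ i) + x ^+ (q ^ n).
Proof.
rewrite /q_poly rmorphD rmorph_sum /= hornerD horner_sum map_polyXn hornerXn.
congr (_ + _); apply: eq_bigr => i _.
by rewrite rmorphM /= map_polyC map_polyXn hornerCM hornerXn.
Qed.

Lemma gA (g : 'AEnd(E)) (c : F) : g (in_alg E c) = in_alg E c.
Proof. by rewrite /= linearZ /= rmorph1. Qed.

Lemma root_aut (g : 'AEnd(E)) x : root LE x -> root LE (g x).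
Proof.
rewrite /root !evalL => /eqP H; apply/eqP.
have E1 : g (\sum_(i < n) in_alg E (a i) * x ^+ (q ^ i) + x ^+ (q ^ n)) =
   \sum_(i < n) in_alg E (a i) * g x ^+ (q ^ i) + g x ^+ (q ^ n).
  rewrite linearD /= linear_sum /=; congr (_ + _); last by rewrite rmorphXn.
  apply: eq_bigr => i _; rewrite rmorphM /= rmorphXn; congr (_ * _).
  exact: gA.
by rewrite -E1 H linear0.
Qed.

Lemma lin_q (b : 'I_n -> E) (c : 'I_n -> K)
  (HQ : forall i, \sum_(j < n) b j * alpha i ^+ (q ^ j) = 0) :
  \sum_(j < n) b j * (\sum_(i < n) f (c i) *: alpha i) ^+ (q ^ j) = 0.
Proof.
under eq_bigr => j _ do rewrite frobq_sum mulr_sumr.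
rewrite exchange_big /=; apply: big1 => i _.
under eq_bigr => j _ do rewrite embZ exprMn embq mulrCA.
by rewrite -mulr_sumr HQ mulr0.
Qed.

Lemma delta_neq0 : \det (moore_mx q alpha) != 0.
Proof.
apply/negP; rewrite -det_tr => /det0P [v vn0 vD].
have HQ i : \sum_(j < n) v 0 j * alpha i ^+ (q ^ j) = 0.
  transitivity ((v *m (moore_mx q alpha)^T) 0 i); last by rewrite vD mxE.
  by rewrite mxE; apply: eq_bigr => j _; rewrite !mxE.
pose P : {poly E} := \sum_(j < n) v 0 j *: 'X^(q ^ j).
have Pev x : P.[x] = \sum_(j < n) v 0 j * x ^+ (q ^ j).
  by rewrite horner_sum; apply: eq_bigr => j _; rewrite hornerZ hornerXn.
pose s := map (fun c : {ffun 'I_n -> K} => \sum_(i < n) f (c i) *: alpha i)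
              (enum {ffun 'I_n -> K}).
have ss : size s = (q ^ n)%N by rewrite size_map -cardE card_ffun card_ord HK.
have us : uniq s.
  rewrite map_inj_uniq ?enum_uniq // => c1 c2 /eqP; rewrite -subr_eq0 => /eqP H.
  apply/ffunP => i; apply/eqP; rewrite -subr_eq0; apply/eqP.
  apply: (Hfree (c := fun i => c1 i - c2 i)) i.
  rewrite -sumrB in H; rewrite -[RHS]H; apply: eq_bigr => j _; by rewrite rmorphB scalerBl.
have rs : all (root P) s.
  apply/allP => _ /mapP [c _ ->]; rewrite /root Pev; apply/eqP; exact: lin_q.
have szP : (size P <= (q ^ n.-1).+1)%N.
  rewrite /P; elim/big_ind: _ => [|p1 p2 h1 h2|j _]; first by rewrite size_poly0.
    by apply: leq_trans (size_polyD _ _) _; rewrite geq_max h1.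
  apply: leq_trans (size_scale_leq _ _) _.
  rewrite size_polyXn ltnS leq_pexp2l ?(ltnW q_gt1) //.
  by rewrite -ltnS prednK.
have P0 : P = 0.
  apply: roots_geq_poly_eq0 rs us _; rewrite ss (leq_trans szP) //.
  rewrite -{2}(prednK Hn) expnS.
  have qpos : (0 < q ^ n.-1)%N by rewrite expn_gt0 (ltnW q_gt1).
  have := q_gt1; move: qpos; set m := (q ^ n.-1)%N; nia.
apply/negP: vn0; apply/negPn/eqP/rowP => j; rewrite mxE.
have := congr1 (fun P : {poly E} => P`_(q ^ j)) P0.
rewrite coef0 coef_sum (bigD1 j) //= big1 ?addr0 => [|i /negbTE ij].
  by rewrite coefZ coefXn eqxx mulr1.
by rewrite coefZ coefXn eqn_exp2l ?q_gt1 // eq_sym (inj_eq val_inj) ij mulr0.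
Qed.

Lemma key (g : 'AEnd(E)) : exists2 c, c \in 1%VS /\ c ^+ q = c &
  g (\det (moore_mx q alpha)) = c * \det (moore_mx q alpha).
Proof.
have: forall i, exists cc : {ffun 'I_n -> K}, g (alpha i) = \sum_(j < n) f (cc j) *: alpha j.
  move=> i; have [c Hc] := Hspan (root_aut g (Hroots i)).
  by exists [ffun j => c j]; rewrite Hc; apply: eq_bigr => j _; rewrite ffunE.
case/fin_all_exists => C HC.
have gX (x : E) m : g (x ^+ m) = g x ^+ m by rewrite rmorphXn.
pose Cm : 'M[K]_n := \matrix_(i, j) C i j.
have Hmap : map_mx g (moore_mx q alpha) =
    map_mx (in_alg E) (map_mx f Cm) *m moore_mx q alpha.
  apply/matrixP => i j; rewrite !mxE gX HC frobq_sum.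
  apply: eq_bigr => l _; rewrite !mxE embZ exprMn embq //.
exists (in_alg E (f (\det Cm))).
  split; first by rewrite /= memvZ ?mem1v.
  by rewrite -(expn1 q) (embq 1).
have -> : g (\det (moore_mx q alpha)) = \det (map_mx g (moore_mx q alpha)).
  by rewrite det_map_mx.
by rewrite Hmap det_mulmx !det_map_mx.
Qed.

Lemma sep_q : separable_poly (q_poly q n a).
Proof.
have pq i : (0 < i)%N -> (q ^ i)%:R = 0 :> F.
  move=> i0; apply/eqP; rewrite -(dvdn_pcharf HcharF).
  by apply: dvdn_exp i0 _; rewrite Hqk; apply: dvdn_exp Hk (dvdnn p).
have dX i : (0 < i)%N -> ('X^(q ^ i))^`() = 0 :> {poly F}.
  by move=> i0; rewrite derivXn -scaler_nat pq // scale0r.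
have D : (q_poly q n a)^`() = (a 0%N)%:P.
  rewrite /q_poly derivD dX // addr0 linear_sum /= (bigD1 (Ordinal Hn)) //= big1 ?addr0.
    by rewrite deriv_mulC expn0 derivX mulr1.
  by move=> i i0; rewrite deriv_mulC dX ?mulr0 // lt0n; apply: contra i0 => /eqP i0; apply/eqP/val_inj.
rewrite separable_poly.unlock D -[(a 0%N)%:P]mulr1 mul_polyC coprimep_sym coprimepZl //.
by rewrite coprimep_sym coprimep1.
Qed.

Lemma galE (HE : splittingFieldFor 1%VS LE fullv) : galois (1%VS : {vspace E}) fullv.
Proof.
apply/splitting_galoisField; exists LE; split => //; last by rewrite separable_map sep_q.
by apply/polyOverP => i; rewrite coef_map /= memvZ ?mem1v.
Qed.

Lemma main_sec (HE : splittingFieldFor 1%VS LE fullv) :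
  let delta := \det (moore_mx q alpha) in
  [/\ delta != 0,
      delta ^+ (q - 1) \in 1%VS
    & normalField 1%VS <<1; delta>>%VS].
Proof.
move=> delta; have dn0 : delta != 0 := delta_neq0.
have cfacts (g : 'AEnd(E)) : exists2 c, [/\ c \in 1%VS, c != 0 & c ^+ (q - 1) = 1] &
    g delta = c * delta.
  have [c [c1 cq] Hg] := key g; exists c => //.
  have cn0 : c != 0.
    have : g delta != 0 by rewrite fmorph_eq0.
    by rewrite Hg; apply: contra => /eqP ->; rewrite mul0r.
  split => //; apply: (mulIf cn0); rewrite mul1r -exprSr subn1 prednK ?cq //.
  exact: ltnW q_gt1.
split => //.
  have /galois_fixedField <- := galE HE.
  apply/fixedFieldP; first exact: memvf.
  move=> s _; have [c [_ _ cq1] Hg] := cfacts (gal_repr s).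
  have -> : s (delta ^+ (q - 1)) = (s delta) ^+ (q - 1) by rewrite rmorphXn.
  by rewrite Hg exprMn cq1 mul1r.
apply/forall_inP => g _; apply/eqP.
have [c [c1 cn0 _] Hg] := cfacts g.
rewrite aimg_adjoin aimg1 Hg; apply/eqP; rewrite eqEsubv; apply/andP; split.
  apply/FadjoinP; split; first exact: subv_adjoin.
  by rewrite rpredM ?memv_adjoin // (subvP (subv_adjoin _ _)).
apply/FadjoinP; split; first exact: subv_adjoin.
have e : c^-1 * (c * delta) = delta by rewrite mulrA mulVf ?mul1r.
rewrite -{1}e rpredM ?memv_adjoin //.
by apply: (subvP (subv_adjoin _ _)); rewrite rpredV.
Qed.
End Main.

Theorem lemma2p1
  (p q : nat) (F : fieldType)
  (Hp : prime p) (Hq : exists k, (0 < k)%N /\ q = (p ^ k)%N)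
  (HcharF : p \in [pchar F])
  (* F contains F_q : a field K of order q embedded in F *)
  (K : finFieldType) (f : {rmorphism K -> F}) (HK : #|K| = q)
  (n : nat) (Hn : (0 < n)%N) (a : nat -> F) (Ha0 : a 0%N != 0)
  (* E is a splitting field of L over F *)
  (E : splittingFieldType F)
  (HE : splittingFieldFor 1%VS (map_poly (in_alg E) (q_poly q n a)) fullv)
  (* alpha is an F_q-basis of the F_q-space V of roots of L in E *)
  (alpha : 'I_n -> E)
  (Hroots : forall i, root (map_poly (in_alg E) (q_poly q n a)) (alpha i))
  (Hfree : forall c : 'I_n -> K,
      \sum_(i < n) f (c i) *: alpha i = 0 -> forall i, c i = 0)
  (Hspan : forall x : E, root (map_poly (in_alg E) (q_poly q n a)) x ->
      exists c : 'I_n -> K, x = \sum_(i < n) f (c i) *: alpha i) :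
  let delta := \det (moore_mx q alpha) in
  [/\ delta != 0,
      delta ^+ (q - 1) \in 1%VS
    & normalField 1%VS <<1; delta>>%VS].
Proof.
have [k [Hk Hqk]] := Hq.
exact: (main_sec Hp Hk Hqk HcharF HK Hn Ha0 Hroots Hfree Hspan HE).
Qed.
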